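(* Let $\rho\in(0,1)$. If $\mathbf a=(x_1,y_1)\in\mathbb R^2$ satisfies $\mathbf a\neq\mathbf a^*$ and $K(\mathbf a,\mathbf b^* )\le 0$, then $x_1+y_1<0$ and either $x_1^2+y_1^2<2x_2^{*2}$ or $x_1+y_1\le -2x_2^*$.
   Context: Standing setup. Fix $\sigma_x,\sigma_y>0$ and $\rho\in(-1,1)$, and let $(\xi,\eta)$ be a bivariate normal random vector with mean $(0,0)$ and covariance matrix $\Sigma=\begin{pmatrix}\sigma_x^2&\rho\sigma_x\sigma_y\\ \rho\sigma_x\sigma_y&\sigma_y^2\end{pmatrix}$. Player I (the minimizer) chooses $\mathbf a=(x_1,y_1)\in\mathbb R^2$ and Player II (the maximizer) chooses $\mathbf b=(x_2,y_2)\in\mathbb R^2$. Let $C_1(\mathbf a,\mathbf b)=\{(x,y):(x_1-x)^2+(y_1-y)^2<(x_2-x)^2+(y_2-y)^2\}$ and $C_2(\mathbf a,\mathbf b)=\{(x,y):(x_1-x)^2+(y_1-y)^2>(x_2-x)^2+(y_2-y)^2\}$. The payoff to Player II (paid by Player I) is $K(\mathbf a,\mathbf b)=x_1+y_1$ if $\mathbf a=\mathbf b$, and $K(\mathbf a,\mathbf b)=(x_1+y_1)\,P((\xi,\eta)\in C_1(\mathbf a,\mathbf b))+(x_2+y_2)\,P((\xi,\eta)\in C_2(\mathbf a,\mathbf b))$ if $\mathbf a\neq\mathbf b$. For $\mathbf a=(x,y)$ write $-\mathbf a=(-x,-y)$. Let $x_2^*=\frac{\sqrt{2\pi(\sigma_x^2+2\rho\sigma_x\sigma_y+\sigma_y^2)}}{4}$,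 $\mathbf b^*=(x_2^*,x_2^* )$ and $\mathbf a^*=(-x_2^*,-x_2^* )$. *)

(* Defs.v *)
From Stdlib Require Import Reals Lra ClassicalDescription ClassicalEpsilon.
Open Scope R_scope.

(* Density of the centred bivariate normal law with covariance
   [[sx^2, rho sx sy],[rho sx sy, sy^2]]. *)
Definition bvn_density (sx sy rho : R) (x y : R) : R :=
  / (2 * PI * sx * sy * sqrt (1 - rho ^ 2)) *
  exp (- / (2 * (1 - rho ^ 2)) *
       (x ^ 2 / sx ^ 2 - 2 * rho * x * y / (sx * sy) + y ^ 2 / sy ^ 2)).

Definition improper_integral_R (g : R -> R) (l : R) : Prop :=
  forall eps : R, 0 < eps ->
    exists M : R, 0 < M /\
      forall a b : R, a <= - M -> M <= b ->
        exists pr : Riemann_integrable g a b, Rabs (RiemannInt pr - l) < eps.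

Definition indic (C : R -> R -> Prop) (x y : R) : R :=
  if excluded_middle_informative (C x y) then 1 else 0.

(* P((xi,eta) \in C), computed as the iterated integral of the density
   over C (Tonelli); the value is chosen by Hilbert's epsilon among the
   values of the (unique, when it exists) iterated integral. *)
Definition bvn_prob (sx sy rho : R) (C : R -> R -> Prop) : R :=
  epsilon (inhabits 0) (fun l =>
    exists h : R -> R,
      (forall x, improper_integral_R
                   (fun y => indic C x y * bvn_density sx sy rho x y) (h x)) /\
      improper_integral_R h l).

Definition sqdist (p : R * R) (x y : R) : R :=
  (fst p - x) ^ 2 + (snd p - y) ^ 2.

Definition C1 (a b : R * R) (x y : R) : Prop := sqdist a x y < sqdist b x y.
Definition C2 (a b : R * R) (x y : R) : Prop := sqdist a x y > sqdist b x y.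

Definition K (sx sy rho : R) (a b : R * R) : R :=
  if excluded_middle_informative (a = b) then fst a + snd a
  else (fst a + snd a) * bvn_prob sx sy rho (C1 a b)
       + (fst b + snd b) * bvn_prob sx sy rho (C2 a b).

Definition x2star (sx sy rho : R) : R :=
  sqrt (2 * PI * (sx ^ 2 + 2 * rho * sx * sy + sy ^ 2)) / 4.

Definition bstar (sx sy rho : R) : R * R := (x2star sx sy rho, x2star sx sy rho).
Definition astar (sx sy rho : R) : R * R := (- x2star sx sy rho, - x2star sx sy rho).

(* Main.v *)
From Stdlib Require Import Reals Lra Classical ClassicalEpsilon.
From Coquelicot Require Import Coquelicot.
Require Import Defs.
Open Scope R_scope.

Definition Imp (g : R -> R) (l : R) : Prop :=
  forall eps, 0 < eps -> exists M, 0 < M /\ forall a b, a <= - M -> M <= b ->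
    ex_RInt g a b /\ Rabs (RInt g a b - l) < eps.

Lemma Imp_to g l : Imp g l -> improper_integral_R g l.
Proof.
  intros H eps He. destruct (H eps He) as [M [HM HH]]. exists M; split; auto.
  intros a b Ha Hb. destruct (HH a b Ha Hb) as [Hex Hl].
  exists (ex_RInt_Reals_0 _ _ _ Hex). rewrite <- RInt_Reals. exact Hl.
Qed.

Lemma Imp_from g l : improper_integral_R g l -> Imp g l.
Proof.
  intros H eps He. destruct (H eps He) as [M [HM HH]]. exists M; split; auto.
  intros a b Ha Hb. destruct (HH a b Ha Hb) as [pr Hl]. split.
  - exact (ex_RInt_Reals_1 _ _ _ pr).
  - rewrite (RInt_Reals _ _ _ pr). exact Hl.
Qed.

Lemma plusR (x y : R) : plus x y = x + y. Proof. reflexivity. Qed.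
Lemma scalR (x y : R) : scal x y = x * y. Proof. reflexivity. Qed.
Lemma oppR (x : R) : opp x = - x. Proof. reflexivity. Qed.

Lemma Imp_unique g l1 l2 : Imp g l1 -> Imp g l2 -> l1 = l2.
Proof.
  intros H1 H2. apply Rminus_diag_uniq. destruct (Req_dec (l1 - l2) 0) as [E|E]; auto.
  exfalso. set (e := Rabs (l1 - l2) / 2). assert (He : 0 < e) by (unfold e; pose proof (Rabs_pos_lt _ E); lra).
  destruct (H1 e He) as [M1 [HM1 K1]]. destruct (H2 e He) as [M2 [HM2 K2]].
  set (M := Rmax M1 M2).
  destruct (K1 (-M) M) as [_ A1]; [unfold M; pose proof (Rmax_l M1 M2); lra| unfold M; apply Rmax_l|].
  destruct (K2 (-M) M) as [_ A2]; [unfold M; pose proof (Rmax_r M1 M2); lra| unfold M; apply Rmax_r|].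
  assert (Rabs (l1 - l2) <= Rabs (RInt g (-M) M - l2) + Rabs (RInt g (-M) M - l1)).
  { replace (l1 - l2) with ((RInt g (-M) M - l2) - (RInt g (-M) M - l1)) by ring.
    eapply Rle_trans; [apply Rabs_triang|]. rewrite Rabs_Ropp. lra. }
  unfold e in *. lra.
Qed.

Lemma Imp_le g1 g2 l1 l2 : (forall x, g1 x <= g2 x) -> Imp g1 l1 -> Imp g2 l2 -> l1 <= l2.
Proof.
  intros Hg H1 H2. apply Rnot_lt_le; intro Hlt.
  set (e := (l1 - l2) / 2). assert (He : 0 < e) by (unfold e; lra).
  destruct (H1 e He) as [M1 [HM1 K1]]. destruct (H2 e He) as [M2 [HM2 K2]].
  set (M := Rmax M1 M2).
  destruct (K1 (-M) M) as [X1 A1]; [unfold M; pose proof (Rmax_l M1 M2); lra| unfold M; apply Rmax_l|].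
  destruct (K2 (-M) M) as [X2 A2]; [unfold M; pose proof (Rmax_r M1 M2); lra| unfold M; apply Rmax_r|].
  assert (RInt g1 (-M) M <= RInt g2 (-M) M).
  { apply RInt_le; auto. unfold M; pose proof (Rmax_l M1 M2); lra. }
  apply Rabs_def2 in A1. apply Rabs_def2 in A2. unfold e in *. lra.
Qed.

Lemma RInt_mono_int g a a0 b0 b : (forall x, 0 <= g x) -> a <= a0 -> a0 <= b0 -> b0 <= b ->
  ex_RInt g a b -> RInt g a0 b0 <= RInt g a b.
Proof.
  intros Hg H1 H2 H3 Hex.
  assert (E1 : ex_RInt g a b0) by (exact (@ex_RInt_Chasles_1 R_CompleteNormedModule g a b0 b ltac:(lra) Hex)).
  assert (E2 : ex_RInt g b0 b) by (exact (@ex_RInt_Chasles_2 R_CompleteNormedModule g a b0 b ltac:(lra) Hex)).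
  assert (E3 : ex_RInt g a a0) by (exact (@ex_RInt_Chasles_1 R_CompleteNormedModule g a a0 b0 ltac:(lra) E1)).
  assert (E4 : ex_RInt g a0 b0) by (exact (@ex_RInt_Chasles_2 R_CompleteNormedModule g a a0 b0 ltac:(lra) E1)).
  assert (C1 : RInt g a b0 + RInt g b0 b = RInt g a b) by exact (RInt_Chasles g a b0 b E1 E2).
  assert (C2 : RInt g a a0 + RInt g a0 b0 = RInt g a b0) by exact (RInt_Chasles g a a0 b0 E3 E4).
  assert (0 <= RInt g a a0) by (apply RInt_ge_0; [lra|exact E3|intros; apply Hg]).
  assert (0 <= RInt g b0 b) by (apply RInt_ge_0; [lra|exact E2|intros; apply Hg]). lra.
Qed.

Lemma Imp_lower g l c d : (forall x, 0 <= g x) -> Imp g l -> c <= d -> RInt g c d <= l.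
Proof.
  intros Hg H Hcd. apply Rnot_lt_le; intro Hlt.
  set (e := (RInt g c d - l) / 2). assert (He : 0 < e) by (unfold e; lra).
  destruct (H e He) as [M [HM K1]].
  set (a := Rmin (-M) c). set (b := Rmax M d).
  destruct (K1 a b) as [X A]; [unfold a; apply Rmin_l| unfold b; apply Rmax_l|].
  assert (RInt g c d <= RInt g a b).
  { apply RInt_mono_int; auto; [unfold a; apply Rmin_r| unfold b; apply Rmax_r]. }
  apply Rabs_def2 in A. unfold e in *. lra.
Qed.

Lemma Imp_ge0 g l : (forall x, 0 <= g x) -> Imp g l -> 0 <= l.
Proof.
  intros Hg H. pose proof (Imp_lower g l 0 0 Hg H (Rle_refl 0)). rewrite RInt_point in H0. exact H0.
Qed.

Lemma Imp_ext g g' l : (forall y, g y = g' y) -> Imp g l -> Imp g' l.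
Proof.
  intros E H eps He. destruct (H eps He) as [M [HM K1]]. exists M; split; auto.
  intros a b Ha Hb. destruct (K1 a b Ha Hb) as [X A]. split.
  - apply (ex_RInt_ext g); auto.
  - rewrite <- (RInt_ext g); auto.
Qed.
Lemma Imp_scal g l c : Imp g l -> Imp (fun y => c * g y) (c * l).
Proof.
  intros H eps He. set (e := eps / (Rabs c + 1)).
  assert (He' : 0 < e) by (unfold e; apply Rdiv_lt_0_compat; [lra| pose proof (Rabs_pos c); lra]).
  destruct (H e He') as [M [HM K1]]. exists M; split; auto.
  intros a b Ha Hb. destruct (K1 a b Ha Hb) as [X A].
  assert (X' : ex_RInt (fun y => c * g y) a b) by exact (@ex_RInt_scal R_NormedModule g a b c X).
  split; [exact X'|].
  assert (Eq : RInt (fun y => c * g y) a b = c * RInt g a b) by exact (@RInt_scal R_CompleteNormedModule g a b c X).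
  rewrite Eq.
  replace (c * RInt g a b - c * l) with (c * (RInt g a b - l)) by ring.
  rewrite Rabs_mult.
  assert (Rabs c * Rabs (RInt g a b - l) <= Rabs c * e) by (apply Rmult_le_compat_l; [apply Rabs_pos| lra]).
  assert (Rabs c * e < eps).
  { unfold e. pose proof (Rabs_pos c).
    replace (Rabs c * (eps / (Rabs c + 1))) with (eps * (Rabs c / (Rabs c + 1))) by (field; lra).
    assert (Rabs c / (Rabs c + 1) < 1) by (apply (Rmult_lt_reg_r (Rabs c + 1)); [lra|]; unfold Rdiv; rewrite Rmult_assoc, Rinv_l; lra).
    rewrite <- (Rmult_1_r eps) at 2. apply Rmult_lt_compat_l; lra. }
  lra.
Qed.

Lemma Imp_shift g l s : Imp g l -> Imp (fun y => g (y - s)) l.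
Proof.
  intros H eps He. destruct (H eps He) as [M [HM K1]]. exists (M + Rabs s); split.
  { pose proof (Rabs_pos s); lra. }
  intros a b Ha Hb. pose proof (Rabs_pos s). pose proof (Rle_abs s). pose proof (Rle_abs (-s)).
  rewrite Rabs_Ropp in H2.
  destruct (K1 (a - s) (b - s)) as [X A]; [lra|lra|].
  assert (X1 : ex_RInt g (1 * a + - s) (1 * b + - s)).
  { replace (1 * a + - s) with (a - s) by ring. replace (1 * b + -s) with (b - s) by ring. exact X. }
  assert (X' : ex_RInt (fun y => 1 * (g (1 * y + - s))) a b) by exact (@ex_RInt_comp_lin R_NormedModule g 1 (-s) a b X1).
  assert (E' : RInt (fun y => 1 * (g (1 * y + - s))) a b = RInt g (1 * a + - s) (1 * b + - s))
    by exact (@RInt_comp_lin R_CompleteNormedModule g 1 (-s) a b X1).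
  assert (Eq : forall y, 1 * (g (1 * y + - s)) = g (y - s)).
  { intro y. replace (1 * y + - s) with (y - s) by ring. ring. }
  split.
  - apply (ex_RInt_ext _ _ a b (fun y _ => Eq y) X').
  - rewrite <- (RInt_ext _ _ a b (fun y _ => Eq y)). rewrite E'.
    replace (1 * a + - s) with (a - s) by ring. replace (1 * b + -s) with (b - s) by ring. auto.
Qed.

Lemma Imp_opp g l : Imp g l -> Imp (fun x => g (- x)) l.
Proof.
  intros H eps He. destruct (H eps He) as [M [HM K1]]. exists M; split; auto.
  intros a b Ha Hb. destruct (K1 (-b) (-a)) as [X A]; [lra|lra|].
  assert (I1 : is_RInt g (-b) (-a) (RInt g (-b) (-a))) by exact (@RInt_correct R_CompleteNormedModule g _ _ X).
  assert (I2 := @is_RInt_swap R_NormedModule g _ _ _ I1).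
  assert (I3 := @is_RInt_comp_opp R_NormedModule g a b _ I2).
  assert (I4 := @is_RInt_opp R_NormedModule _ a b _ I3).
  assert (I5 : is_RInt (fun x => g (- x)) a b (RInt g (-b) (-a))).
  { eapply (@is_RInt_ext R_NormedModule); [| rewrite <- (opp_opp (RInt g (-b) (-a))); exact I4].
    intros x _. simpl. rewrite opp_opp. reflexivity. }
  split.
  - exists (RInt g (-b) (-a)); exact I5.
  - rewrite (is_RInt_unique _ _ _ _ I5). exact A.
Qed.

Lemma Imp_exists g B : (forall x, 0 <= g x) -> (forall a b, ex_RInt g a b) ->
  (forall a b, a <= b -> RInt g a b <= B) -> exists l, Imp g l.
Proof.
  intros Hg Hex HB.
  set (E := fun v => exists a b, a <= b /\ v = RInt g a b).
  assert (Hb : bound E) by (exists B; intros v [a [b [Hab ->]]]; auto).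
  assert (Hne : exists v, E v) by (exists (RInt g 0 0); exists 0, 0; split; [lra|auto]).
  destruct (completeness E Hb Hne) as [l [Hub Hlub]].
  exists l. intros eps He.
  destruct (classic (exists v, E v /\ l - eps < v)) as [[v [[a0 [b0 [Hab ->]]] Hv]] | Hn].
  2: { exfalso. assert (l <= l - eps); [|lra]. apply Hlub. intros v Ev.
       apply Rnot_lt_le. intro. apply Hn. exists v; split; auto. }
  exists (Rmax 1 (Rmax (- a0) b0)). split.
  { pose proof (Rmax_l 1 (Rmax (-a0) b0)); lra. }
  intros a b Ha Hb'. pose proof (Rmax_r 1 (Rmax (-a0) b0)). pose proof (Rmax_l (-a0) b0).
  pose proof (Rmax_r (-a0) b0). split; [apply Hex|].
  assert (RInt g a0 b0 <= RInt g a b) by (apply RInt_mono_int; auto; lra).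
  assert (RInt g a b <= l) by (apply Hub; exists a, b; split; [lra|auto]).
  apply Rabs_def1; lra.
Qed.

Lemma os_exists g B : (forall x, 0 <= g x) -> (forall a b, ex_RInt g a b) ->
  (forall b, 0 <= b -> RInt g 0 b <= B) ->
  exists L, forall eps, 0 < eps -> exists M, forall b, M <= b -> Rabs (RInt g 0 b - L) < eps.
Proof.
  intros Hg Hex HB.
  set (E := fun v => exists b, 0 <= b /\ v = RInt g 0 b).
  assert (Hb : bound E) by (exists B; intros v [b [Hab ->]]; auto).
  assert (Hne : exists v, E v) by (exists (RInt g 0 0); exists 0; split; [lra|auto]).
  destruct (completeness E Hb Hne) as [l [Hub Hlub]].
  exists l. intros eps He.
  destruct (classic (exists v, E v /\ l - eps < v)) as [[v [[b0 [Hab ->]] Hv]] | Hn].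
  2: { exfalso. assert (l <= l - eps); [|lra]. apply Hlub. intros v Ev.
       apply Rnot_lt_le. intro. apply Hn. exists v; split; auto. }
  exists b0. intros b Hb'.
  assert (RInt g 0 b0 <= RInt g 0 b) by (apply RInt_mono_int; auto; lra).
  assert (RInt g 0 b <= l) by (apply Hub; exists b; split; [lra|auto]).
  apply Rabs_def1; lra.
Qed.

Lemma step_up (F g : R -> R) c a b : a <= c <= b -> (forall y, continuous g y) ->
  (forall y, c < y -> F y = g y) -> (forall y, y < c -> F y = 0) ->
  ex_RInt F a b /\ RInt F a b = RInt g c b.
Proof.
  intros Hc Hg H1 H2.
  assert (I1 : is_RInt (fun _ => 0) a c 0).
  { pose proof (@is_RInt_const R_NormedModule a c 0). rewrite scalR, Rmult_0_r in H. exact H. }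
  assert (I1' : is_RInt F a c 0).
  { eapply (@is_RInt_ext R_NormedModule); [|exact I1]. intros x Hx.
    rewrite Rmin_left, Rmax_right in Hx by lra. rewrite H2; auto; lra. }
  assert (X : ex_RInt g c b) by (apply (@ex_RInt_continuous R_CompleteNormedModule); intros; apply Hg).
  assert (I2 : is_RInt g c b (RInt g c b)) by exact (@RInt_correct R_CompleteNormedModule g _ _ X).
  assert (I2' : is_RInt F c b (RInt g c b)).
  { eapply (@is_RInt_ext R_NormedModule); [|exact I2]. intros x Hx.
    rewrite Rmin_left, Rmax_right in Hx by lra. rewrite H1; auto; lra. }
  assert (I3 := @is_RInt_Chasles R_NormedModule F a c b _ _ I1' I2').
  rewrite plusR, Rplus_0_l in I3. split.
  - exists (RInt g c b); exact I3.
  - exact (is_RInt_unique _ _ _ _ I3).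
Qed.

Lemma step_ex (F g : R -> R) c a b : (forall y, continuous g y) ->
  (forall y, c < y -> F y = g y) -> (forall y, y < c -> F y = 0) -> ex_RInt F a b.
Proof.
  intros Hg H1 H2.
  assert (forall a b, a <= b -> ex_RInt F a b).
  { clear a b. intros a b Hab.
    destruct (Rle_lt_dec c a) as [Hca|Hca].
    - assert (X : ex_RInt g a b) by (apply (@ex_RInt_continuous R_CompleteNormedModule); intros; apply Hg).
      eapply (@ex_RInt_ext R_NormedModule); [|exact X]. intros x Hx.
      rewrite Rmin_left, Rmax_right in Hx by lra. rewrite H1; auto; lra.
    - destruct (Rle_lt_dec b c) as [Hbc|Hbc].
      + assert (X : ex_RInt (fun _ => 0) a b) by (apply (@ex_RInt_continuous R_CompleteNormedModule); intros; apply continuous_const).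
        eapply (@ex_RInt_ext R_NormedModule); [|exact X]. intros x Hx.
        rewrite Rmin_left, Rmax_right in Hx by lra. rewrite H2; auto; lra.
      + apply (step_up F g c a b); auto; lra. }
  destruct (Rle_lt_dec a b); auto. apply (@ex_RInt_swap R_NormedModule). apply H; lra.
Qed.

Definition gk (k t : R) : R := exp (- k * t ^ 2).

Lemma gk_pos k t : 0 < gk k t. Proof. unfold gk; apply exp_pos. Qed.

Lemma gk_cont k t : continuous (gk k) t.
Proof. apply (@ex_derive_continuous R_AbsRing R_NormedModule). unfold gk. auto_derive. auto. Qed.

Lemma gk_even k t : gk k (- t) = gk k t.
Proof. unfold gk. f_equal. ring. Qed.

Lemma gk_ex k a b : ex_RInt (gk k) a b.
Proof. apply (@ex_RInt_continuous R_CompleteNormedModule). intros; apply gk_cont. Qed.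

Lemma gk_le k t : 0 < k -> gk k t <= (1 + / k) * / (1 + t ^ 2).
Proof.
  intro Hk. unfold gk.
  assert (H0 : 0 <= k * t ^ 2) by (apply Rmult_le_pos; [lra| apply pow2_ge_0]).
  assert (H1 : 1 + k * t ^ 2 <= exp (k * t ^ 2)) by apply exp_ineq1_le.
  replace (- k * t ^ 2) with (- (k * t ^ 2)) by ring. rewrite exp_Ropp.
  apply Rle_trans with (/ (1 + k * t ^ 2)).
  - apply Rinv_le_contravar; lra.
  - assert (0 < /k) by (apply Rinv_0_lt_compat; lra).
    pose proof (pow2_ge_0 t).
    apply (Rmult_le_reg_r ((1 + k * t ^ 2) * (1 + t ^ 2))). { apply Rmult_lt_0_compat; lra. }
    replace (/ (1 + k * t ^ 2) * ((1 + k * t ^ 2) * (1 + t ^ 2))) with (1 + t ^ 2) by (field; lra).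
    replace ((1 + / k) * / (1 + t ^ 2) * ((1 + k * t ^ 2) * (1 + t ^ 2))) with ((1 + /k) * (1 + k * t^2)) by (field; lra).
    replace ((1 + /k) * (1 + k * t^2)) with (1 + k * t^2 + /k + t^2) by (field; lra).
    nra.
Qed.

Lemma atan_RInt a b : is_RInt (fun t => / (1 + t ^ 2)) a b (atan b - atan a).
Proof.
  apply (@is_RInt_derive R_CompleteNormedModule atan).
  - intros x _. apply is_derive_Reals. apply derivable_pt_lim_atan.
  - intros x _. apply (@ex_derive_continuous R_AbsRing R_NormedModule). auto_derive.
    pose proof (pow2_ge_0 x). simpl. nra.
Qed.

Lemma gk_bound k a b : 0 < k -> a <= b -> RInt (gk k) a b <= (1 + / k) * PI.
Proof.
  intros Hk Hab.
  assert (I : is_RInt (fun t => (1 + / k) * / (1 + t ^ 2)) a b ((1 + / k) * (atan b - atan a)))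
    by exact (@is_RInt_scal R_NormedModule _ a b (1 + / k) _ (atan_RInt a b)).
  apply Rle_trans with ((1 + / k) * (atan b - atan a)).
  - rewrite <- (is_RInt_unique _ _ _ _ I). apply RInt_le; auto.
    + apply gk_ex.
    + exists ((1 + / k) * (atan b - atan a)); exact I.
    + intros; apply gk_le; auto.
  - assert (0 < /k) by (apply Rinv_0_lt_compat; lra).
    pose proof (atan_bound a). pose proof (atan_bound b). apply Rmult_le_compat_l; lra.
Qed.

Lemma gk_os k : 0 < k ->
  exists L, forall eps, 0 < eps -> exists M, forall b, M <= b -> Rabs (RInt (gk k) 0 b - L) < eps.
Proof.
  intro Hk. apply (os_exists _ ((1 + / k) * PI)).
  - intros; left; apply gk_pos.
  - apply gk_ex.
  - intros; apply gk_bound; auto.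
Qed.

Lemma gk_imp k : 0 < k -> exists T, Imp (gk k) T /\ 0 < T.
Proof.
  intro Hk. destruct (Imp_exists (gk k) ((1 + / k) * PI)) as [T HT].
  - intros; left; apply gk_pos.
  - apply gk_ex.
  - intros; apply gk_bound; auto.
  - exists T; split; auto. eapply Rlt_le_trans; [|apply (Imp_lower (gk k) T 0 1); auto; [intros; left; apply gk_pos| lra]].
    apply RInt_gt_0; [lra| intros; apply gk_pos| intros; apply gk_cont].
Qed.

Lemma Imp_upper g L c : (forall y, continuous g y) ->
  (forall eps, 0 < eps -> exists M, forall b, M <= b -> Rabs (RInt g 0 b - L) < eps) ->
  Imp (fun y => if Rlt_dec c y then g y else 0) (RInt g c 0 + L).
Proof.
  intros Hg HL eps He. destruct (HL eps He) as [M0 HM0].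
  exists (Rabs c + Rabs M0 + 1). pose proof (Rabs_pos c). pose proof (Rabs_pos M0).
  pose proof (Rle_abs c). pose proof (Rle_abs (-c)). rewrite Rabs_Ropp in H2. pose proof (Rle_abs M0).
  split; [lra|]. intros a b Ha Hb.
  destruct (step_up (fun y => if Rlt_dec c y then g y else 0) g c a b) as [X E]; [lra|auto| | |].
  { intros y Hy. destruct (Rlt_dec c y); [auto| lra]. }
  { intros y Hy. destruct (Rlt_dec c y); [lra| auto]. }
  split; auto. rewrite E.
  assert (X1 : ex_RInt g c 0) by (apply (@ex_RInt_continuous R_CompleteNormedModule); intros; apply Hg).
  assert (X2 : ex_RInt g 0 b) by (apply (@ex_RInt_continuous R_CompleteNormedModule); intros; apply Hg).
  assert (C : RInt g c 0 + RInt g 0 b = RInt g c b) by exact (RInt_Chasles g c 0 b X1 X2).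
  rewrite <- C. replace (RInt g c 0 + RInt g 0 b - (RInt g c 0 + L)) with (RInt g 0 b - L) by ring.
  apply HM0. lra.
Qed.

Definition W (C : R -> R -> Prop) (d : R -> R -> R) (l : R) : Prop :=
  exists h : R -> R, (forall x, Imp (fun y => indic C x y * d x y) (h x)) /\ Imp h l.

Lemma W_unique C d l1 l2 : W C d l1 -> W C d l2 -> l1 = l2.
Proof.
  intros [h1 [H1 O1]] [h2 [H2 O2]].
  assert (E : forall x, h1 x = h2 x) by (intro x; exact (Imp_unique _ _ _ (H1 x) (H2 x))).
  apply (Imp_unique h2); auto. apply (Imp_ext h1); auto.
Qed.

Lemma bvn_prob_eq sx sy rho C l : W C (bvn_density sx sy rho) l -> bvn_prob sx sy rho C = l.
Proof.
  intro HW. unfold bvn_prob.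
  set (P := fun l : R => exists h : R -> R,
      (forall x, improper_integral_R (fun y => indic C x y * bvn_density sx sy rho x y) (h x)) /\
      improper_integral_R h l).
  assert (HP : exists l, P l).
  { exists l. destruct HW as [h [H1 H2]]. exists h; split; [intro x; apply Imp_to; auto| apply Imp_to; auto]. }
  pose proof (epsilon_spec (inhabits 0) P HP) as Hs.
  fold P. destruct Hs as [h [H1 H2]].
  apply (W_unique C (bvn_density sx sy rho)); auto.
  exists h; split; [intro x; apply Imp_from; auto| apply Imp_from; auto].
Qed.

Lemma indic_01 C x y : indic C x y = 0 \/ indic C x y = 1.
Proof. unfold indic. destruct (excluded_middle_informative (C x y)); auto. Qed.

Lemma W_ge0 C d l : (forall x y, 0 <= d x y) -> W C d l -> 0 <= l.
Proof.
  intros Hd [h [H1 H2]]. apply (Imp_ge0 h); auto.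
  intro x. apply (Imp_ge0 (fun y => indic C x y * d x y) (h x)); [intro y|exact (H1 x)]. destruct (indic_01 C x y) as [E|E]; rewrite E.
  - lra. - rewrite Rmult_1_l; auto.
Qed.

Lemma W_mono A B d l1 l2 : (forall x y, 0 <= d x y) -> (forall x y, A x y -> B x y) ->
  W A d l1 -> W B d l2 -> l1 <= l2.
Proof.
  intros Hd HAB [h1 [H1 O1]] [h2 [H2 O2]]. apply (Imp_le h1 h2 l1 l2); [|exact O1|exact O2].
  intro x. apply (Imp_le (fun y => indic A x y * d x y) (fun y => indic B x y * d x y) (h1 x) (h2 x)); [intro y| exact (H1 x)| exact (H2 x)].
  pose proof (Hd x y) as Hdxy.
  unfold indic. destruct (excluded_middle_informative (A x y)) as [a|a];
  destruct (excluded_middle_informative (B x y)) as [b|b].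
  - apply Rle_refl.
  - exfalso; apply b; apply HAB; exact a.
  - rewrite Rmult_0_l, Rmult_1_l. exact Hdxy.
  - apply Rle_refl.
Qed.

Lemma W_iff A B d l : (forall x y, A x y <-> B x y) -> W A d l -> W B d l.
Proof.
  intros HAB [h [H1 O1]]. exists h; split; [|exact O1]. intro x. apply (Imp_ext (fun y => indic A x y * d x y) _ (h x)); [intro y|exact (H1 x)].
  f_equal. unfold indic. destruct (excluded_middle_informative (A x y)) as [a|a];
  destruct (excluded_middle_informative (B x y)) as [b|b].
  - reflexivity.
  - exfalso; apply b; apply HAB; exact a.
  - exfalso; apply a; apply HAB; exact b.
  - reflexivity.
Qed.

Lemma W_refl C d l : (forall x y, d (- x) (- y) = d x y) -> W C d l -> W (fun x y => C (- x) (- y)) d l.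
Proof.
  intros Hd [h [H1 O1]]. exists (fun x => h (- x)); split.
  - intro x. pose proof (Imp_opp _ _ (H1 (- x))) as Ho. apply (Imp_ext (fun x0 : R => (fun y : R => indic C (- x) y * d (- x) y) (- x0)) (fun y => indic (fun x y => C (- x) (- y)) x y * d x y) (h (- x))); [intro y|exact Ho].
    simpl. rewrite Hd. reflexivity.
  - apply Imp_opp; auto.
Qed.

Definition HP (p q r : R) (x y : R) : Prop := 0 < p * x + q * y + r.

Lemma dens_nonneg sx sy rho x y : 0 < sx -> 0 < sy -> 0 <= bvn_density sx sy rho x y.
Proof.
  intros Hx Hy. unfold bvn_density. apply Rmult_le_pos; [|left; apply exp_pos].
  destruct (Req_dec (sqrt (1 - rho ^ 2)) 0) as [E|E].
  - rewrite E, Rmult_0_r, Rinv_0; lra.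
  - left. apply Rinv_0_lt_compat.
    assert (Hs: 0 < sqrt (1 - rho^2)) by (destruct (sqrt_pos (1 - rho ^ 2)); [auto| exfalso; apply E; auto]).
    pose proof PI_RGT_0.
    assert (0 < 2 * PI) by lra. assert (0 < 2 * PI * sx) by (apply Rmult_lt_0_compat; lra).
    assert (0 < 2 * PI * sx * sy) by (apply Rmult_lt_0_compat; lra).
    apply Rmult_lt_0_compat; lra.
Qed.

Lemma dens_sym sx sy rho x y : bvn_density sx sy rho (- x) (- y) = bvn_density sx sy rho x y.
Proof.
  unfold bvn_density.
  replace ((- x) ^ 2 / sx ^ 2 - 2 * rho * - x * - y / (sx * sy) + (- y) ^ 2 / sy ^ 2)
    with (x ^ 2 / sx ^ 2 - 2 * rho * x * y / (sx * sy) + y ^ 2 / sy ^ 2) by (unfold Rdiv; ring).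
  reflexivity.
Qed.

Definition DA sx sy rho := / (2 * PI * sx * sy * sqrt (1 - rho ^ 2)).
Definition k1 sx := / (2 * sx ^ 2).
Definition k2 sy rho := / (2 * sy ^ 2 * (1 - rho ^ 2)).
Definition mm sx sy rho := rho * sy / sx.

Lemma dens_factor sx sy rho x y : 0 < sx -> 0 < sy -> rho ^ 2 < 1 ->
  bvn_density sx sy rho x y = DA sx sy rho * gk (k1 sx) x * gk (k2 sy rho) (y - mm sx sy rho * x).
Proof.
  intros Hx Hy Hr. unfold bvn_density, DA, gk, k1, k2, mm.
  rewrite (Rmult_assoc (/ (2 * PI * sx * sy * sqrt (1 - rho ^ 2)))), <- exp_plus. f_equal. f_equal.
  field. repeat split; lra.
Qed.

Lemma DA_pos sx sy rho : 0 < sx -> 0 < sy -> rho ^ 2 < 1 -> 0 < DA sx sy rho.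
Proof.
  intros. unfold DA. apply Rinv_0_lt_compat. pose proof PI_RGT_0.
  assert (0 < sqrt (1 - rho ^ 2)) by (apply sqrt_lt_R0; lra).
  assert (0 < 2 * PI) by lra. assert (0 < 2 * PI * sx) by (apply Rmult_lt_0_compat; lra).
  assert (0 < 2 * PI * sx * sy) by (apply Rmult_lt_0_compat; lra).
  apply Rmult_lt_0_compat; lra.
Qed.

Lemma k1_pos sx : 0 < sx -> 0 < k1 sx.
Proof. intros. unfold k1. apply Rinv_0_lt_compat. assert (0 < sx ^ 2) by (apply pow_lt; lra). lra. Qed.

Lemma k2_pos sy rho : 0 < sy -> rho ^ 2 < 1 -> 0 < k2 sy rho.
Proof. intros. unfold k2. apply Rinv_0_lt_compat. assert (0 < sy ^ 2) by (apply pow_lt; lra).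
  apply Rmult_lt_0_compat; lra. Qed.

Lemma eps_le a b : (forall eps, 0 < eps -> a < b + eps) -> a <= b.
Proof. intros H. apply Rnot_lt_le. intro. specialize (H ((a - b) / 2)). lra. Qed.

Lemma J_bounds k L v : 0 < k ->
  (forall eps, 0 < eps -> exists M, forall b, M <= b -> Rabs (RInt (gk k) 0 b - L) < eps) ->
  0 < RInt (gk k) v 0 + L <= (1 + / k) * PI.
Proof.
  intros Hk HL.
  assert (Hlo : 0 < RInt (gk k) v (v + 1)).
  { apply RInt_gt_0; [lra| intros; apply gk_pos| intros; apply gk_cont]. }
  assert (Key : forall eps, 0 < eps -> RInt (gk k) v (v + 1) - eps < RInt (gk k) v 0 + L /\
                                 RInt (gk k) v 0 + L < (1 + / k) * PI + eps).
  { intros eps He. destruct (HL eps He) as [M HM].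
    set (b := Rmax M (Rmax (v + 1) 0)).
    pose proof (Rmax_l M (Rmax (v + 1) 0)). pose proof (Rmax_r M (Rmax (v + 1) 0)).
    pose proof (Rmax_l (v + 1) 0). pose proof (Rmax_r (v + 1) 0). fold b in H, H0.
    specialize (HM b ltac:(lra)). apply Rabs_def2 in HM.
    assert (C : RInt (gk k) v 0 + RInt (gk k) 0 b = RInt (gk k) v b) by exact (RInt_Chasles (gk k) v 0 b (gk_ex k v 0) (gk_ex k 0 b)).
    assert (RInt (gk k) v (v + 1) <= RInt (gk k) v b) by (apply RInt_mono_int; [intros; left; apply gk_pos| lra|lra|lra| apply gk_ex]).
    assert (RInt (gk k) v b <= (1 + / k) * PI) by (apply gk_bound; lra).
    split; lra. }
  split.
  - apply Rlt_le_trans with (RInt (gk k) v (v + 1)); auto.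
    apply eps_le. intros eps He. destruct (Key eps He). lra.
  - apply eps_le. intros eps He. destruct (Key eps He). lra.
Qed.

Lemma cont_J k L (f : R -> R) x : (forall x, continuous f x) -> continuous (fun x => RInt (gk k) (f x) 0 + L) x.
Proof.
  intros Hf.
  apply (@continuous_plus R_UniformSpace R_AbsRing R_NormedModule (fun x => RInt (gk k) (f x) 0) (fun _ => L)).
  - apply (@continuous_comp R_UniformSpace R_UniformSpace R_UniformSpace f (fun v => RInt (gk k) v 0)); auto.
    apply (@continuous_RInt_2 R_NormedModule (gk k) (f x) 0 (fun v => RInt (gk k) v 0)).
    apply filter_forall. intro z. apply (@RInt_correct R_CompleteNormedModule). apply gk_ex.
  - apply continuous_const.
Qed.

Lemma cont_mul3 (A : R) (f g : R -> R) x : continuous f x -> continuous g x ->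
  continuous (fun x => A * f x * g x) x.
Proof.
  intros Hf Hg.
  apply (@continuous_mult R_UniformSpace R_AbsRing (fun x => A * f x) g); auto.
  apply (@continuous_mult R_UniformSpace R_AbsRing (fun _ => A) f); auto. apply continuous_const.
Qed.

Lemma exist_qpos sx sy rho p q r : 0 < sx -> 0 < sy -> rho ^ 2 < 1 -> 0 < q ->
  exists l, W (HP p q r) (bvn_density sx sy rho) l /\ 0 < l.
Proof.
  intros Hsx Hsy Hr Hq.
  set (A := DA sx sy rho). set (a1 := k1 sx). set (a2 := k2 sy rho). set (m := mm sx sy rho).
  assert (HA : 0 < A) by (apply DA_pos; auto).
  assert (Ha1 : 0 < a1) by (apply k1_pos; auto).
  assert (Ha2 : 0 < a2) by (apply k2_pos; auto).
  destruct (gk_os a2 Ha2) as [L HL].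
  set (J := fun v => RInt (gk a2) v 0 + L).
  assert (HJ : forall v, 0 < J v <= (1 + / a2) * PI) by (intro v; apply J_bounds; auto).
  set (cx := fun x => - (p * x + r) / q - m * x).
  set (h0 := fun x => A * gk a1 x * J (cx x)).
  assert (Hcx : forall x, continuous cx x).
  { intro x. apply (@ex_derive_continuous R_AbsRing R_NormedModule). unfold cx. auto_derive. auto. }
  assert (Hh0c : forall x, continuous h0 x).
  { intro x. unfold h0. apply cont_mul3; [apply gk_cont|]. apply (cont_J a2 L cx x Hcx). }
  assert (Hh0p : forall x, 0 < h0 x).
  { intro x. unfold h0. pose proof (gk_pos a1 x). pose proof (HJ (cx x)).
    apply Rmult_lt_0_compat; [apply Rmult_lt_0_compat|]; lra. }
  assert (Hin : forall x, Imp (fun y => indic (HP p q r) x y * bvn_density sx sy rho x y) (h0 x)).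
  { intro x.
    pose proof (Imp_upper (gk a2) L (cx x) (gk_cont a2) HL) as H1.
    pose proof (Imp_shift _ _ (m * x) H1) as H2.
    pose proof (Imp_scal _ _ (A * gk a1 x) H2) as H3.
    eapply (Imp_ext _ (fun y => indic (HP p q r) x y * bvn_density sx sy rho x y) (h0 x)). 2: exact H3.
    intro y. simpl. rewrite dens_factor by auto. fold A a1 a2 m.
    assert (Id : p * x + q * y + r = q * ((y - m * x) - cx x)) by (unfold cx; field; lra).
    unfold indic, HP. destruct (excluded_middle_informative (0 < p * x + q * y + r)) as [h|h];
    destruct (Rlt_dec (cx x) (y - m * x)) as [h'|h'].
    - ring.
    - exfalso. rewrite Id in h. apply h'. nra.
    - exfalso. rewrite Id in h. apply h. nra.
    - ring. }
  set (B2 := (1 + / a2) * PI). set (B1 := (1 + / a1) * PI).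
  destruct (Imp_exists h0 (A * B2 * B1)) as [l Hl].
  - intro x; left; auto.
  - intros a b. apply (@ex_RInt_continuous R_CompleteNormedModule). intros; apply Hh0c.
  - intros a b Hab.
    assert (I : RInt (fun x => (A * B2) * gk a1 x) a b = (A * B2) * RInt (gk a1) a b)
      by exact (@RInt_scal R_CompleteNormedModule (gk a1) a b (A * B2) (gk_ex a1 a b)).
    apply Rle_trans with (RInt (fun x => (A * B2) * gk a1 x) a b).
    + apply RInt_le; auto.
      * apply (@ex_RInt_continuous R_CompleteNormedModule). intros; apply Hh0c.
      * exact (@ex_RInt_scal R_NormedModule (gk a1) a b (A * B2) (gk_ex a1 a b)).
      * intros x _. unfold h0. pose proof (gk_pos a1 x). pose proof (HJ (cx x)). fold B2 in H0.
        replace (A * B2 * gk a1 x) with (A * gk a1 x * B2) by ring.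
        apply Rmult_le_compat_l; [|lra]. left; apply Rmult_lt_0_compat; lra.
    + rewrite I. replace (A * B2 * B1) with ((A * B2) * B1) by ring.
      apply Rmult_le_compat_l; [| apply gk_bound; auto].
      left. apply Rmult_lt_0_compat; auto. unfold B2. apply Rmult_lt_0_compat; [|apply PI_RGT_0].
      pose proof (Rinv_0_lt_compat a2 Ha2). lra.
  - exists l. split.
    + exists h0; split; auto.
    + apply Rlt_le_trans with (RInt h0 0 1).
      * apply RInt_gt_0; [lra| intros; auto| intros; auto].
      * apply (Imp_lower h0 l 0 1); auto; [intro x; left; auto| lra].
Qed.

Lemma exist_q0 sx sy rho p r : 0 < sx -> 0 < sy -> rho ^ 2 < 1 -> 0 < p ->
  exists l, W (HP p 0 r) (bvn_density sx sy rho) l /\ 0 < l.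
Proof.
  intros Hsx Hsy Hr Hp.
  set (A := DA sx sy rho). set (a1 := k1 sx). set (a2 := k2 sy rho). set (m := mm sx sy rho).
  assert (HA : 0 < A) by (apply DA_pos; auto).
  assert (Ha1 : 0 < a1) by (apply k1_pos; auto).
  assert (Ha2 : 0 < a2) by (apply k2_pos; auto).
  destruct (gk_imp a2 Ha2) as [T [HT HTp]].
  set (xs := - r / p).
  set (G := fun x => A * gk a1 x * T).
  set (h0 := fun x => if Rlt_dec xs x then G x else 0).
  assert (HGc : forall x, continuous G x) by (intro x; apply cont_mul3; [apply gk_cont| apply continuous_const]).
  assert (HGp : forall x, 0 < G x).
  { intro x. unfold G. pose proof (gk_pos a1 x). apply Rmult_lt_0_compat; [apply Rmult_lt_0_compat|]; lra. }
  assert (Hh0 : forall x, 0 <= h0 x) by (intro x; unfold h0; destruct (Rlt_dec xs x); [left; auto| lra]).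
  assert (Hup : forall y, xs < y -> h0 y = G y) by (intros y Hy; unfold h0; destruct (Rlt_dec xs y); [auto| lra]).
  assert (Hdn : forall y, y < xs -> h0 y = 0) by (intros y Hy; unfold h0; destruct (Rlt_dec xs y); [lra| auto]).
  assert (Hin : forall x, Imp (fun y => indic (HP p 0 r) x y * bvn_density sx sy rho x y) (h0 x)).
  { intro x.
    pose proof (Imp_shift _ _ (m * x) HT) as H2.
    pose proof (Imp_scal _ _ (A * gk a1 x) H2) as H3.
    assert (Id : p * x + 0 * 0 + r = p * (x - xs)) by (unfold xs; field; lra).
    unfold h0. destruct (Rlt_dec xs x) as [h|h].
    - eapply (Imp_ext _ (fun y => indic (HP p 0 r) x y * bvn_density sx sy rho x y) (G x)). 2: exact H3.
      intro y. simpl. rewrite dens_factor by auto. fold A a1 a2 m.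
      unfold indic, HP. destruct (excluded_middle_informative (0 < p * x + 0 * y + r)) as [h'|h'].
      + ring.
      + exfalso. apply h'. replace (p * x + 0 * y + r) with (p * (x - xs)) by (unfold xs; field; lra). nra.
    - pose proof (Imp_scal _ _ 0 HT) as H4. rewrite Rmult_0_l in H4.
      eapply (Imp_ext _ (fun y => indic (HP p 0 r) x y * bvn_density sx sy rho x y) 0). 2: exact H4.
      intro y. simpl.
      unfold indic, HP. destruct (excluded_middle_informative (0 < p * x + 0 * y + r)) as [h'|h'].
      + exfalso. apply h. replace (p * x + 0 * y + r) with (p * (x - xs)) in h' by (unfold xs; field; lra). nra.
      + ring. }
  set (B1 := (1 + / a1) * PI).
  destruct (Imp_exists h0 (A * T * B1)) as [l Hl].
  - auto.
  - intros a b. apply (step_ex h0 G xs); auto.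
  - intros a b Hab.
    assert (I : RInt (fun x => (A * T) * gk a1 x) a b = (A * T) * RInt (gk a1) a b)
      by exact (@RInt_scal R_CompleteNormedModule (gk a1) a b (A * T) (gk_ex a1 a b)).
    apply Rle_trans with (RInt (fun x => (A * T) * gk a1 x) a b).
    + apply RInt_le; auto.
      * apply (step_ex h0 G xs); auto.
      * exact (@ex_RInt_scal R_NormedModule (gk a1) a b (A * T) (gk_ex a1 a b)).
      * intros x _. unfold h0, G. destruct (Rlt_dec xs x).
        -- lra.
        -- pose proof (gk_pos a1 x). left. repeat apply Rmult_lt_0_compat; lra.
    + rewrite I. apply Rmult_le_compat_l; [| apply gk_bound; auto].
      left. apply Rmult_lt_0_compat; auto.
  - exists l. split.
    + exists h0; split; auto.
    + apply Rlt_le_trans with (RInt h0 (xs + 1) (xs + 2)).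
      * rewrite (RInt_ext h0 G). 2: { intros x Hx. rewrite Rmin_left, Rmax_right in Hx by lra. apply Hup. lra. }
        apply RInt_gt_0; [lra| intros; auto| intros; auto].
      * apply (Imp_lower h0 l); auto; lra.
Qed.

Lemma exist_hp sx sy rho p q r : 0 < sx -> 0 < sy -> rho ^ 2 < 1 -> (p <> 0 \/ q <> 0) ->
  exists l, W (HP p q r) (bvn_density sx sy rho) l /\ 0 < l.
Proof.
  intros Hsx Hsy Hr Hpq.
  assert (Refl : forall p q, (exists l, W (HP (- p) (- q) r) (bvn_density sx sy rho) l /\ 0 < l) ->
     exists l, W (HP p q r) (bvn_density sx sy rho) l /\ 0 < l).
  { intros p' q' [l [Hw Hl]]. exists l; split; auto.
    apply (W_iff (fun x y => HP (- p') (- q') r (- x) (- y))).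
    - intros x y. unfold HP. replace (- p' * - x + - q' * - y + r) with (p' * x + q' * y + r) by ring. tauto.
    - apply W_refl; auto. intros; apply dens_sym. }
  destruct (Rtotal_order q 0) as [Hq|[Hq|Hq]].
  - apply Refl. apply exist_qpos; auto. lra.
  - subst q. destruct Hpq as [Hp|Hp]; [|lra].
    destruct (Rtotal_order p 0) as [Hp'|[Hp'|Hp']]; [|lra|].
    + apply Refl. replace (- 0) with 0 by ring. apply exist_q0; auto. lra.
    + apply exist_q0; auto.
  - apply exist_qpos; auto.
Qed.

Theorem mainTheorem9 (sx sy rho : R) (hsx : 0 < sx) (hsy : 0 < sy)
  (hrho0 : 0 < rho) (hrho1 : rho < 1) (x1 y1 : R)
  (hne : (x1, y1) <> astar sx sy rho)
  (hK : K sx sy rho (x1, y1) (bstar sx sy rho) <= 0) :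
  x1 + y1 < 0 /\
  (x1 ^ 2 + y1 ^ 2 < 2 * (x2star sx sy rho) ^ 2 \/
   x1 + y1 <= - 2 * x2star sx sy rho).
Proof.
  set (c := x2star sx sy rho) in *.
  assert (Hc : 0 < c).
  { unfold c, x2star. pose proof PI_RGT_0.
    assert (0 < sx * sy) by (apply Rmult_lt_0_compat; auto).
    assert (0 < sx ^ 2 + 2 * rho * sx * sy + sy ^ 2) by nra.
    assert (0 < sqrt (2 * PI * (sx ^ 2 + 2 * rho * sx * sy + sy ^ 2))) by (apply sqrt_lt_R0; nra).
    lra. }
  assert (Hr : rho ^ 2 < 1) by nra.
  unfold K, bstar in hK. fold c in hK.
  destruct (excluded_middle_informative ((x1, y1) = (c, c))) as [E|Hab].
  { simpl in hK. inversion E; subst. lra. }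
  simpl in hK.
  assert (Hpq : 2 * (x1 - c) <> 0 \/ 2 * (y1 - c) <> 0).
  { destruct (Req_dec x1 c); destruct (Req_dec y1 c); subst; try (left; lra); try (right; lra).
    exfalso; apply Hab; reflexivity. }
  set (r1 := 2 * c ^ 2 - x1 ^ 2 - y1 ^ 2).
  assert (E1 : forall x y, HP (2 * (x1 - c)) (2 * (y1 - c)) r1 x y <-> C1 (x1, y1) (c, c) x y).
  { intros x y. unfold HP, C1, sqdist, r1; simpl. split; intro; nra. }
  assert (E2 : forall x y, HP (- (2 * (x1 - c))) (- (2 * (y1 - c))) (- r1) x y <-> C2 (x1, y1) (c, c) x y).
  { intros x y. unfold HP, C2, sqdist, r1; simpl. split; intro; nra. }
  destruct (exist_hp sx sy rho (2 * (x1 - c)) (2 * (y1 - c)) r1 hsx hsy Hr Hpq) as [l1 [W1 _]].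
  destruct (exist_hp sx sy rho (- (2 * (x1 - c))) (- (2 * (y1 - c))) (- r1) hsx hsy Hr) as [l2 [W2 Hl2]].
  { destruct Hpq; [left|right]; lra. }
  pose proof (W_iff _ _ _ _ E1 W1) as W1'. pose proof (W_iff _ _ _ _ E2 W2) as W2'.
  rewrite (bvn_prob_eq _ _ _ _ _ W1'), (bvn_prob_eq _ _ _ _ _ W2') in hK.
  assert (Hl1 : 0 <= l1) by (apply (W_ge0 _ _ _ (fun x y => dens_nonneg sx sy rho x y hsx hsy) W1)).
  assert (Hs : x1 + y1 < 0).
  { apply Rnot_le_lt. intro. assert (0 <= (x1 + y1) * l1) by (apply Rmult_le_pos; auto). nra. }
  split; auto.
  destruct (Rlt_or_le (x1 ^ 2 + y1 ^ 2) (2 * c ^ 2)) as [Hn|Hn]; [left; auto| right].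
  assert (Hle : l1 <= l2).
  { apply (W_mono (fun x y => HP (2 * (x1 - c)) (2 * (y1 - c)) r1 (- x) (- y))
                  (HP (- (2 * (x1 - c))) (- (2 * (y1 - c))) (- r1)) (bvn_density sx sy rho)).
    - intros; apply dens_nonneg; auto.
    - intros x y. unfold HP, r1. intro. nra.
    - apply W_refl; auto. intros; apply dens_sym.
    - auto. }
  apply Rnot_lt_le. intro. nra.
Qed.
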